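(* For any ${\bm{p}}\in\Delta_K^+=\{{\bm{p}}\in\mathbb{R}^K:{\bm{p}}>0,\ \sum_kp_k=1\}$, if $L^{\mathrm{same}}({\bm{p}})=L^*_N({\bm{p}})$, then $$\sum_{k=1}^Kp_k\frac{\partial f_k({\bm{p}})}{\partial p_i}=0\quad\text{for all }i\in[K].$$
   Context: Setting: distributions $\mathcal{D}_1,\dots,\mathcal{D}_K$ on $\mathcal{Z}$, a loss $\ell(h,{\bm{z}})$ (all expectations finite), $N\ge1$, a learning algorithm $\mathcal{A}:\mathcal{Z}^N\to\mathcal{H}$. For ${\bm{r}}\in\Delta_K=\{{\bm{r}}\ge0:\sum_kr_k=1\}$, $\bar e_k({\bm{r}})=\mathbb{E}_{S\sim(\sum_jr_j\mathcal{D}_j)^N}\mathbb{E}_{{\bm{z}}\sim\mathcal{D}_k}[\ell(\mathcal{A}(S),{\bm{z}})]$; $f_k({\bm{r}})=\bar e_k({\bm{r}}/|{\bm{r}}|)$ on $\mathbb{R}^K_{\ge0}\setminus\{\mathbf{0}\}$; $L_N({\bm{p}},{\bm{r}})=\sum_kp_kf_k({\bm{r}})$, $L^{\mathrm{same}}({\bm{p}})=L_N({\bm{p}},{\bm{p}})$, $L^*_N({\bm{p}})=\min_{{\bm{r}}\in\Delta_K}L_N({\bm{p}},{\bm{r}})$. *)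

(* Defs.v *)
From HB Require Import structures.
From mathcomp Require Import all_boot all_order all_algebra.
From mathcomp Require Import all_classical all_reals all_analysis.
Set Implicit Arguments. Unset Strict Implicit. Unset Printing Implicit Defensive.
Import Order.TTheory GRing.Theory Num.Theory.
Import numFieldNormedType.Exports.
Local Open Scope classical_set_scope.
Local Open Scope ring_scope.

Section Setting.
Context {R : realType} {d : measure_display} {Z : measurableType d} {H : Type}
  {K N : nat} (D : 'I_K -> probability Z R) (loss : H -> Z -> R)
  (A : N.-tuple Z -> H).

Definition simplex : set 'rV[R]_K :=
  [set r | (forall k, 0 <= r ord0 k) /\ \sum_k r ord0 k = 1].

Definition simplex_pos : set 'rV[R]_K :=
  [set r | (forall k, 0 < r ord0 k) /\ \sum_k r ord0 k = 1].

(* Expectation of h : Z -> R under the mixture sum_j r_j D_j. *)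
Definition mixE (r : 'rV[R]_K) (h : Z -> R) : R :=
  \sum_j r ord0 j * Rintegral (D j) setT h.

(* Expectation over S = (z_1,...,z_n) i.i.d. from the mixture sum_j r_j D_j,
   computed as the iterated integral (Fubini) over the n coordinates. *)
Fixpoint sampleE (r : 'rV[R]_K) (n : nat) : (n.-tuple Z -> R) -> R :=
  match n return (n.-tuple Z -> R) -> R with
  | 0 => fun g => g [tuple]
  | n'.+1 => fun g =>
      mixE r (fun z => sampleE r (fun t : n'.-tuple Z => g [tuple of z :: t]))
  end.

Fixpoint iterE (n : nat) : n.-tuple 'I_K -> (n.-tuple Z -> \bar R) -> \bar R :=
  match n return n.-tuple 'I_K -> (n.-tuple Z -> \bar R) -> \bar R with
  | 0 => fun _ g => g [tuple]
  | n'.+1 => fun js g =>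
      (\int[D (thead js)]_z
          iterE [tuple of behead js]
                (fun t : n'.-tuple Z => g [tuple of z :: t]))%E
  end.

Definition ebar (k : 'I_K) (r : 'rV[R]_K) : R :=
  sampleE r (fun S : N.-tuple Z => Rintegral (D k) setT (fun z => loss (A S) z)).

Definition l1 (r : 'rV[R]_K) : R := \sum_k r ord0 k.

Definition f (k : 'I_K) (r : 'rV[R]_K) : R := ebar k ((l1 r)^-1 *: r).

Definition L_N (p r : 'rV[R]_K) : R := \sum_k p ord0 k * f k r.

Definition L_same (p : 'rV[R]_K) : R := L_N p p.

Definition L_star (p : 'rV[R]_K) : R := inf [set L_N p r | r in simplex].

(* "all expectations finite": for every choice of the mixture components
   js_1..js_N of the sample and every k, the loss is integrable w.r.t.
   D_{js_1} x ... x D_{js_N} x D_k (iterated integral of |loss| finite). *)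
Definition all_expectations_finite : Prop :=
  forall (js : N.-tuple 'I_K) (k : 'I_K),
    (iterE js (fun S => \int[D k]_z (`| loss (A S) z |)%:E) < +oo)%E.

End Setting.

Definition partial {R : realType} {K : nat} (g : 'rV[R]_K -> R)
  (x : 'rV[R]_K) (i : 'I_K) : R := derive g x (delta_mx ord0 i).

(* Main.v *)
Require Import Defs.
Set Warnings "-all".
From HB Require Import structures.
From mathcomp Require Import all_boot all_order all_algebra.
From mathcomp Require Import all_classical all_reals all_analysis.
From mathcomp Require Import measurable_realfun.
From mathcomp Require Import lra.
Set Warnings "-all".
Import Order.TTheory GRing.Theory Num.Theory.
Import numFieldNormedType.Exports.
Set Implicit Arguments. Unset Strict Implicit. Unset Printing Implicit Defensive.
Local Open Scope classical_set_scope.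
Local Open Scope ring_scope.

Lemma meas_eint (R : realType) d (Z : measurableType d) dX (X : measurableType dX)
  (mu : probability Z R) (h : (X * Z)%type -> \bar R) :
  measurable_fun setT h ->
  measurable_fun setT (fun x => (\int[mu]_z h (x, z))%E).
Proof.
move=> mh.
have -> : (fun x => (\int[mu]_z h (x, z))%E) =
   (fun x => (\int[mu]_z (h^\+ (x, z)) - \int[mu]_z (h^\- (x, z)))%E).
  rewrite funeqE => x; rewrite [LHS]integralE.
  under eq_integral do rewrite funepos_comp/=.
  by under [X in (_ - X = _)%E]eq_integral do rewrite funeneg_comp/=.
apply: (emeasurable_funB (f := fun x => (\int[mu]_z h^\+ (x, z))%E)
   (g := fun x => (\int[mu]_z h^\- (x, z))%E)).
  exact: (@measurable_fun_fubini_tonelli_F _ _ X Z R mu (h^\+)%E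
     (measurable_funepos mh) (fun x => funepos_ge0 _ _)).
exact: (@measurable_fun_fubini_tonelli_F _ _ X Z R mu (h^\-)%E
     (measurable_funeneg mh) (fun x => funeneg_ge0 _ _)).
Qed.

Lemma meas_Rint (R : realType) d (Z : measurableType d) dX (X : measurableType dX)
  (mu : probability Z R) (h : (X * Z)%type -> R) :
  measurable_fun setT h ->
  measurable_fun setT (fun x => Rintegral mu setT (fun z => h (x, z))).
Proof.
move=> mh; rewrite /Rintegral.
apply: (measurableT_comp (fine_measurable measurableT)).
apply: (@meas_eint R d Z dX X mu (EFin \o h)).
exact/measurable_EFinP.
Qed.

Lemma mabs (R : realType) dX (X : measurableType dX) (g : X -> R) :
  measurable_fun setT g -> measurable_fun setT (fun x => (`|g x|)%:E).
Proof.
move=> mg; apply/measurable_EFinP.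
exact: (measurableT_comp (@normr_measurable R setT) mg).
Qed.

Section Meas.
Context (R : realType) (d : measure_display) (Z : measurableType d) (K : nat)
  (D : 'I_K -> probability Z R).

Fixpoint IR (n : nat) : n.-tuple 'I_K -> (n.-tuple Z -> R) -> R :=
  match n return n.-tuple 'I_K -> (n.-tuple Z -> R) -> R with
  | 0 => fun _ g => g [tuple]
  | n'.+1 => fun js g =>
      Rintegral (D (thead js)) setT (fun z =>
          IR [tuple of behead js] (fun t : n'.-tuple Z => g [tuple of z :: t]))
  end.

Lemma mcons dX (X : measurableType dX) n :
  measurable_fun [set: (X * Z) * n.-tuple Z]
    (fun y : (X * Z) * n.-tuple Z => (y.1.1, [tuple of y.1.2 :: y.2])).
Proof.
apply: measurable_fun_pair.
  exact: (measurableT_comp measurable_fst measurable_fst).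
apply: (measurable_cons (f := fun y : (X * Z) * n.-tuple Z => y.1.2)
   (g := fun y : (X * Z) * n.-tuple Z => y.2)).
  exact: (measurableT_comp measurable_snd measurable_fst).
exact: measurable_snd.
Qed.

Lemma meas_sampleE (r : 'rV[R]_K) n : forall dX (X : measurableType dX)
  (G : (X * n.-tuple Z)%type -> R), measurable_fun setT G ->
  measurable_fun setT (fun x => sampleE D r (fun t => G (x, t))).
Proof.
elim: n => [|n IH] dX X G mG /=.
  exact: (measurable_fun_pair1 _ mG).
rewrite /mixE.
apply: measurable_sum => j.
apply: measurable_funM; first exact: measurable_cst.
pose G' := fun y : (X * Z) * n.-tuple Z => G (y.1.1, [tuple of y.1.2 :: y.2]).
have mG' : measurable_fun setT G' by exact: (measurableT_comp mG (mcons (X:=X) (n:=n))).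
have := IH _ _ G' mG'.
move/(meas_Rint (D j)).
by [].
Qed.

Lemma meas_IR n (js : n.-tuple 'I_K) : forall dX (X : measurableType dX)
  (G : (X * n.-tuple Z)%type -> R), measurable_fun setT G ->
  measurable_fun setT (fun x => IR js (fun t => G (x, t))).
Proof.
elim: n js => [|n IH] js dX X G mG /=.
  exact: (measurable_fun_pair1 _ mG).
pose G' := fun y : (X * Z) * n.-tuple Z => G (y.1.1, [tuple of y.1.2 :: y.2]).
have mG' : measurable_fun setT G' by exact: (measurableT_comp mG (mcons (X:=X) (n:=n))).
have := IH [tuple of behead js] _ _ G' mG'.
move/(meas_Rint (D (thead js))).
by [].
Qed.

Lemma iterE_ge0 n (js : n.-tuple 'I_K) (g : n.-tuple Z -> \bar R) :
  (forall t, (0 <= g t)%E) -> (0 <= iterE D js g)%E.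
Proof.
elim: n js g => [|n IH] js g g0 /=; first exact: g0.
apply: integral_ge0 => z _; apply: IH => t; exact: g0.
Qed.

Lemma meas_iterE n (js : n.-tuple 'I_K) : forall dX (X : measurableType dX)
  (G : (X * n.-tuple Z)%type -> \bar R), measurable_fun setT G ->
  measurable_fun setT (fun x => iterE D js (fun t => G (x, t))).
Proof.
elim: n js => [|n IH] js dX X G mG /=.
  exact: (measurable_fun_pair1 _ mG).
pose G' := fun y : (X * Z) * n.-tuple Z => G (y.1.1, [tuple of y.1.2 :: y.2]).
have mG' : measurable_fun setT G' by exact: (measurableT_comp mG (mcons (X:=X) (n:=n))).
have := IH [tuple of behead js] _ _ G' mG'.
move/(meas_eint (D (thead js))).
by [].
Qed.


Lemma abs_Rint (mu : probability Z R) (F : Z -> R) :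
  measurable_fun setT F ->
  ((`|Rintegral mu setT F|)%:E <= \int[mu]_z (`|F z|)%:E)%E.
Proof.
move=> mF; rewrite /Rintegral.
have [fin|nfin] := boolP ((\int[mu]_(x in setT) (F x)%:E)%E \is a fin_num).
  rewrite -abse_EFin fineK //.
  apply: le_trans (le_abse_integral _ _ _) _ => //.
    exact/measurable_EFinP.
move: nfin; case: (\int[mu]_(x in setT) (F x)%:E)%E => //= _; rewrite normr0;
  by apply: integral_ge0.
Qed.

Lemma Rint_sum (mu : probability Z R) (I : Type) (s : seq I) (h : I -> Z -> R) :
  (forall i, mu.-integrable setT (EFin \o h i)) ->
  Rintegral mu setT (fun z => \sum_(i <- s) h i z) =
  \sum_(i <- s) Rintegral mu setT (h i).
Proof.
move=> ih; elim: s => [|i s IH].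
  rewrite big_nil; under eq_Rintegral do rewrite big_nil.
  by rewrite Rintegral_cst // mul0r.
rewrite big_cons; under eq_Rintegral do rewrite big_cons.
rewrite RintegralD //; first by rewrite IH.
have -> : (EFin \o (fun z => \sum_(j <- s) h j z)) =
   (fun z => \sum_(j <- s) (EFin \o h j) z).
  by rewrite funeqE => z /=; rewrite sumEFin.
exact: integrable_sum.
Qed.


Fixpoint W (r : 'rV[R]_K) (n : nat) : (n.-tuple 'I_K -> R) -> R :=
  match n return (n.-tuple 'I_K -> R) -> R with
  | 0 => fun c => c [tuple]
  | n'.+1 => fun c =>
      \sum_j r ord0 j * W r (fun js : n'.-tuple 'I_K => c [tuple of j :: js])
  end.

Lemma W_int (r : 'rV[R]_K) (mu : probability Z R) n :
  forall (c : Z -> n.-tuple 'I_K -> R),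
  (forall js, mu.-integrable setT (EFin \o (fun z => c z js))) ->
  mu.-integrable setT (EFin \o (fun z => W r (c z))) /\
  Rintegral mu setT (fun z => W r (c z)) =
  W r (fun js => Rintegral mu setT (fun z => c z js)).
Proof.
elim: n => [|n IH] c ic /=; first by split => //; exact: ic.
have IHj := fun j : 'I_K =>
  IH (fun z js => c z [tuple of j :: js]) (fun js => ic _).
have ij : forall j, mu.-integrable setT
   (EFin \o (fun z => r ord0 j * W r (fun js => c z [tuple of j :: js]))).
  move=> j; have -> : (EFin \o (fun z => r ord0 j * W r (fun js => c z [tuple of j :: js])))
     = (fun z => (r ord0 j)%:E * (EFin \o (fun z => W r (fun js => c z [tuple of j :: js]))) z)%E.
    by rewrite funeqE => z /=; rewrite EFinM.
  by apply: integrableZl => //; case: (IHj j).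
split.
  have -> : (EFin \o (fun z => \sum_j r ord0 j * W r (fun js => c z [tuple of j :: js]))) =
     (fun z => \sum_(j <- index_enum 'I_K) (EFin \o (fun z =>
        r ord0 j * W r (fun js => c z [tuple of j :: js]))) z).
    by rewrite funeqE => z /=; rewrite sumEFin.
  exact: integrable_sum.
rewrite Rint_sum //; apply: eq_bigr => j _.
rewrite RintegralZl //; last by case: (IHj j).
by case: (IHj j) => _ ->.
Qed.

Lemma ae_forall (mu : probability Z R) (I : finType) (P : I -> Z -> Prop) :
  (forall i, {ae mu, forall z, P i z}) -> {ae mu, forall z, forall i, P i z}.
Proof.
move=> h.
suff : {ae mu, forall z, forall i, i \in enum I -> P i z}.
  by apply: filterS => z Hz i; apply: Hz; rewrite mem_enum.
elim: (enum I) => [|i s IH].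
  by apply: filterE => z i; rewrite in_nil.
apply: (filterS2 _ _ (h i) IH) => z Pi Ps j.
by rewrite in_cons => /orP[/eqP->//|]; exact: Ps.
Qed.


Lemma mcons2 n : measurable_fun [set: Z * n.-tuple Z]
  (fun zt : Z * n.-tuple Z => [tuple of zt.1 :: zt.2]).
Proof. exact: (measurable_cons measurable_fst measurable_snd). Qed.

Lemma mcons1 n (z : Z) : measurable_fun [set: n.-tuple Z]
  (fun t : n.-tuple Z => [tuple of z :: t]).
Proof.
have := measurable_cons (f := fun _ : n.-tuple Z => z) (g := id)
   (measurable_cst z) (@measurable_id _ _ _).
by [].
Qed.

Lemma IR_bound n (js : n.-tuple 'I_K) : forall (G : n.-tuple Z -> R)
  (Phi : n.-tuple Z -> \bar R), measurable_fun setT G ->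
  measurable_fun setT Phi -> (forall t, (0 <= Phi t)%E) ->
  (forall t, ((`|G t|)%:E <= Phi t)%E) ->
  ((`|IR js G|)%:E <= iterE D js Phi)%E.
Proof.
elim: n js => [|n IH] js G Phi mG mPhi Phi0 hb /=; first exact: hb.
have mG2 : measurable_fun setT (fun zt : Z * n.-tuple Z => G [tuple of zt.1 :: zt.2]).
  exact: (measurableT_comp mG (mcons2 (n:=n))).
have mPhi2 : measurable_fun setT (fun zt : Z * n.-tuple Z => Phi [tuple of zt.1 :: zt.2]).
  exact: (measurableT_comp mPhi (mcons2 (n:=n))).
apply: le_trans (abs_Rint _ _) _.
  exact: (meas_IR [tuple of behead js] mG2).
apply: ge0_le_integral => //.
- apply: mabs.
  exact: (meas_IR [tuple of behead js] mG2).
- exact: (meas_iterE [tuple of behead js] mPhi2).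
- move=> z _; apply: IH => //.
  + exact: (measurableT_comp mG (@mcons1 n z)).
  + exact: (measurableT_comp mPhi (@mcons1 n z)).
Qed.

Lemma sampleE_W n : forall (G : n.-tuple Z -> R)
  (Phi : n.-tuple Z -> \bar R), measurable_fun setT G ->
  measurable_fun setT Phi -> (forall t, (0 <= Phi t)%E) ->
  (forall t, ((`|G t|)%:E <= Phi t)%E) ->
  (forall js, (iterE D js Phi < +oo)%E) ->
  forall r, sampleE D r G = W r (fun js => IR js G).
Proof.
elim: n => [|n IH] G Phi mG mPhi Phi0 hb hfin r /=; first by [].
rewrite /mixE; apply: eq_bigr => j _; congr (_ * _).
have bh : forall js : n.-tuple 'I_K, [tuple of behead [tuple of j :: js]] = js.
  by move=> js; apply: val_inj.
have E1 : (fun js : n.-tuple 'I_K => IR [tuple of j :: js] G) =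
   (fun js => Rintegral (D j) setT (fun z => IR js (fun t => G [tuple of z :: t]))).
  by rewrite funeqE => js /=; rewrite theadE bh.
rewrite E1.
have mG2 : measurable_fun setT (fun zt : Z * n.-tuple Z => G [tuple of zt.1 :: zt.2]).
  exact: (measurableT_comp mG (mcons2 (n:=n))).
have mPhi2 : measurable_fun setT (fun zt : Z * n.-tuple Z => Phi [tuple of zt.1 :: zt.2]).
  exact: (measurableT_comp mPhi (mcons2 (n:=n))).
have hfin' : forall js : n.-tuple 'I_K,
    (\int[D j]_z iterE D js (fun t => Phi [tuple of z :: t]) < +oo)%E.
  by move=> js; have := hfin [tuple of j :: js] => /=; rewrite theadE bh.
have iIR : forall js : n.-tuple 'I_K, (D j).-integrable setT
    (EFin \o (fun z => IR js (fun t => G [tuple of z :: t]))).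
  move=> js; apply/integrableP; split.
    exact/measurable_EFinP/(meas_IR js mG2).
  apply: le_lt_trans (hfin' js).
  apply: ge0_le_integral => //.
  - apply: mabs.
    exact: (meas_IR js mG2).
  - exact: (meas_iterE js mPhi2).
  - move=> z _ /=; apply: IR_bound => //.
    + exact: (measurableT_comp mG (@mcons1 n z)).
    + exact: (measurableT_comp mPhi (@mcons1 n z)).
have [iW <-] := W_int r (c := fun z js => IR js (fun t => G [tuple of z :: t])) iIR.
rewrite /Rintegral; congr fine.
apply: ae_eq_integral => //.
- exact/measurable_EFinP/(meas_sampleE r mG2).
- exact: (measurable_int _ iW).
have : {ae D j, forall z, forall js : n.-tuple 'I_K,
    (iterE D js (fun t => Phi [tuple of z :: t]) < +oo)%E}.
  apply: ae_forall => js.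
  have ii : (D j).-integrable setT (fun z => iterE D js (fun t => Phi [tuple of z :: t])).
    apply/integrableP; split; first exact: (meas_iterE js mPhi2).
    apply: le_lt_trans (hfin' js); rewrite le_eqVlt; apply/orP; left; apply/eqP.
    apply: eq_integral => z _; rewrite gee0_abs //.
    by apply: iterE_ge0 => t.
  apply: filterS (integrable_ae measurableT ii) => z /(_ I).
  by move/fin_numPlt/andP => [].
apply: filterS => z Hz _ /=; congr EFin.
apply: (IH _ (fun t => Phi [tuple of z :: t])) => //.
- exact: (measurableT_comp mG (@mcons1 n z)).
- exact: (measurableT_comp mPhi (@mcons1 n z)).
Qed.

End Meas.

Section Calc.
Context (R : realType) (K : nat).

Lemma W_derivable n (u : R -> 'rV[R]_K) (t0 : R) :
  (forall j, derivable (fun t => u t ord0 j) t0 1) ->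
  forall c : n.-tuple 'I_K -> R, derivable (fun t => W (u t) c) t0 1.
Proof.
move=> du; elim: n => [|n IH] c /=.
  exact: (derivable_cst (c [tuple])).
have -> : (fun t => \sum_j u t ord0 j * W (u t) (fun js => c [tuple of j :: js])) =
   \sum_(j < K) ((fun t => u t ord0 j) * (fun t => W (u t) (fun js => c [tuple of j :: js]))).
  by rewrite fct_sumE.
apply: derivable_sum => j; apply: derivableM => //; exact: IH.
Qed.

Lemma coord_derivable (e p : 'rV[R]_K) j (t0 : R) : t0 + 1 != 0 ->
  derivable (fun t : R => ((t + 1)^-1 *: (t *: e + p)) ord0 j) t0 1.
Proof.
move=> h.
have d1 : derivable (fun t : R => t + 1) t0 1.
  have := derivableD (@derivable_id R R^o t0 1) (@derivable_cst R R^o R^o (1:R) t0 1).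
  by move=> H; exact: H.
have d2 : derivable (fun t : R => (t + 1)^-1) t0 1.
  exact: (derivableV (f := fun t : R => t + 1) h d1).
have d3 : derivable (fun t : R => e ord0 j * t + p ord0 j) t0 1.
  have := derivableD (derivableZ (k := e ord0 j) (@derivable_id R R^o t0 1))
     (@derivable_cst R R^o R^o (p ord0 j) t0 1).
  by move=> H; exact: H.
have := derivableM d2 d3.
suff -> : (fun t : R => ((t + 1)^-1 *: (t *: e + p)) ord0 j) =
   ((fun t : R => (t + 1)^-1) * (fun t : R => e ord0 j * t + p ord0 j)) by [].
by rewrite funeqE => t; rewrite !mxE /= [t * _]mulrC.
Qed.

Lemma derive_dir (g : 'rV[R]_K -> R) (a v : 'rV[R]_K) :
  derive g a v = derive (fun t : R => g (t *: v + a)) 0 1.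
Proof.
rewrite /derive.
suff -> : (fun h : R => h^-1 *: ((g \o shift a) (h *: v) - g a)) =
  (fun h : R => h^-1 *: (((fun t : R => g (t *: v + a)) \o shift 0) (h *: 1)
     - g (0 *: v + a))) by [].
by rewrite funeqE => h /=; rewrite scale0r add0r addr0 [h *: 1]mulr1.
Qed.

Fixpoint Mb (n : nat) : (n.-tuple 'I_K -> R) -> R :=
  match n return (n.-tuple 'I_K -> R) -> R with
  | 0 => fun c => `|c [tuple]|
  | n'.+1 => fun c => \sum_(j : 'I_K) Mb (fun js : n'.-tuple 'I_K => c [tuple of j :: js])
  end.

Lemma le1_simplex (r : 'rV[R]_K) j : simplex r -> r ord0 j <= 1.
Proof.
move=> [r0 r1]; rewrite -r1 (bigD1 j) //= lerDl.
by apply: sumr_ge0 => k _.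
Qed.

Lemma W_bound n (r : 'rV[R]_K) : simplex r ->
  forall c : n.-tuple 'I_K -> R, `|W r c| <= Mb c.
Proof.
move=> hr; elim: n => [|n IH] c /=; first by [].
apply: le_trans (ler_norm_sum _ _ _) _.
apply: ler_sum => j _; rewrite normrM.
rewrite -[X in _ <= X]mul1r; apply: ler_pM => //.
by rewrite ger0_norm; [exact: le1_simplex | case: hr].
Qed.

Lemma l1_scale (c : R) (x : 'rV[R]_K) : l1 (c *: x) = c * l1 x.
Proof. by rewrite /l1 mulr_sumr; apply: eq_bigr => k _; rewrite mxE. Qed.

Lemma l1_dir (t : R) (i : 'I_K) (p : 'rV[R]_K) :
  l1 (t *: delta_mx ord0 i + p) = t * 1 + l1 p.
Proof.
rewrite /l1; under eq_bigr do rewrite !mxE.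
rewrite big_split /= -mulr_sumr; congr (t * _ + _).
rewrite (bigD1 i) //= eqxx /= big1 ?addr0 // => k ki.
by rewrite (negbTE ki).
Qed.

End Calc.

Lemma ebar_W (R : realType) (d : measure_display) (Z : measurableType d)
  (H : Type) (K N : nat) (D : 'I_K -> probability Z R) (loss : H -> Z -> R)
  (A : N.-tuple Z -> H)
  (Hmeas : measurable_fun [set: N.-tuple Z * Z]
             (fun Sz : N.-tuple Z * Z => loss (A Sz.1) Sz.2))
  (Hfin : all_expectations_finite D loss A) k r :
  ebar D loss A k r =
  W r (fun js => IR D js (fun S => Rintegral (D k) setT (fun z => loss (A S) z))).
Proof.
rewrite /ebar.
apply: (sampleE_W (Phi := fun S => (\int[D k]_z (`|loss (A S) z|)%:E)%E)).
- exact: (meas_Rint (D k) Hmeas).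
- exact: (meas_eint (D k) (h := fun Sz : N.-tuple Z * Z => (`|loss (A Sz.1) Sz.2|)%:E) (mabs Hmeas)).
- by move=> S; apply: integral_ge0.
- move=> S; apply: abs_Rint.
  exact: (measurable_fun_pair2 S Hmeas).
- by move=> js; exact: Hfin.
Qed.

Unset Implicit Arguments.

Theorem lemmaB2 (R : realType) (d : measure_display) (Z : measurableType d)
  (H : Type) (K N : nat) (D : 'I_K -> probability Z R) (loss : H -> Z -> R)
  (A : N.-tuple Z -> H)
  (HN : (0 < N)%N)
  (Hmeas : measurable_fun [set: N.-tuple Z * Z]
             (fun Sz : N.-tuple Z * Z => loss (A Sz.1) Sz.2))
  (Hfin : all_expectations_finite D loss A)
  (p : 'rV[R]_K) (Hp : simplex_pos p)
  (Hopt : L_same D loss A p = L_star D loss A p) :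
  forall i : 'I_K, \sum_k p ord0 k * partial (f D loss A k) p i = 0.
Proof.
move=> i.
set e : 'rV[R]_K := delta_mx ord0 i.
have [ppos psum] := Hp.
pose c k := fun js : N.-tuple 'I_K =>
  IR D js (fun S => Rintegral (D k) setT (fun z => loss (A S) z)).
have fW : forall k x, f D loss A k x = W ((l1 x)^-1 *: x) (c k).
  by move=> k x; rewrite /f (ebar_W Hmeas Hfin).
pose u t := (t + 1)^-1 *: (t *: e + p).
have l1p : l1 p = 1 := psum.
have l1te : forall t, l1 (t *: e + p) = t + 1.
  by move=> t; rewrite /e l1_dir l1p mulr1.
pose psi k t := f D loss A k (t *: e + p).
have psiE : forall k t, psi k t = W (u t) (c k).
  by move=> k t; rewrite /psi fW l1te.
have dpsi : forall k t, t + 1 != 0 -> derivable (psi k) t 1.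
  move=> k t ht.
  have -> : psi k = (fun s => W (u s) (c k)) by rewrite funeqE => s; exact: psiE.
  apply: (W_derivable (u:=u)) => j; exact: (coord_derivable (e:=e) (p:=p) (j:=j) ht).
have psimp : simplex p by split => // k; exact: ltW (ppos k).
have pi1 : p ord0 i <= 1 := le1_simplex i psimp.
have pi0 := ppos i.
have tpos : forall t, t \in `]- p ord0 i, p ord0 i[ -> 0 < t + 1.
  by move=> t; rewrite in_itv /= => /andP[h1 _]; lra.
pose Psi := \sum_(k < K) (p ord0 k \*: psi k).
have PsiE : forall t, Psi t = \sum_k p ord0 k * psi k t.
  by move=> t; rewrite /Psi fct_sumE.
have dPsi : forall t, t + 1 != 0 -> derivable Psi t 1.
  move=> t ht; apply: derivable_sum => k; apply: derivableZ; exact: dpsi.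
have LNu : forall t, 0 < t + 1 -> Psi t = L_N D loss A p (u t).
  move=> t ht; rewrite PsiE /L_N; apply: eq_bigr => k _; congr (_ * _).
  rewrite psiE fW /u l1_scale l1te mulVf ?invr1 ?scale1r //; exact: lt0r_neq0.
have u0 : u 0 = p by rewrite /u add0r invr1 scale1r scale0r add0r.
have simp_u : forall t, t \in `]- p ord0 i, p ord0 i[ -> simplex (u t).
  move=> t ht; have hp := tpos t ht; split.
    move=> k; rewrite /u /e !mxE; apply: mulr_ge0; first by rewrite invr_ge0 ltW.
    rewrite eqxx /=; case: eqP => [->|_] /=.
      by rewrite mulr1; move: ht; rewrite in_itv /= => /andP[h1 _]; lra.
    by rewrite mulr0 add0r; exact: ltW (ppos k).
  change (l1 (u t) = 1); rewrite /u l1_scale l1te mulVf //.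
  exact: lt0r_neq0.
have lbS : has_lbound [set L_N D loss A p r | r in simplex].
  exists (- \sum_k p ord0 k * Mb (c k)) => y [r hr <-].
  rewrite /L_N -sumrN; apply: ler_sum => k _.
  have l1r : l1 r = 1 := hr.2.
  rewrite fW l1r invr1 scale1r.
  have := W_bound hr (c k); rewrite ler_norml => /andP[h1 _].
  by rewrite -mulrN; apply: ler_wpM2l => //; exact: ltW (ppos k).
have Hmin : forall t, t \in `]- p ord0 i, p ord0 i[ -> Psi 0 <= Psi t.
  move=> t ht.
  rewrite (LNu 0); last by rewrite add0r ltr01.
  rewrite u0 (LNu t (tpos t ht)).
  change (L_same D loss A p <= L_N D loss A p (u t)); rewrite Hopt /L_star.
  by apply: (ge_inf lbS); exists (u t) => //; exact: simp_u.
have hab : - p ord0 i <= p ord0 i by lra.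
have hder : forall t, t \in `]- p ord0 i, p ord0 i[ -> derivable Psi t 1.
  by move=> t ht; apply: dPsi; exact/lt0r_neq0/tpos.
have h0 : (0:R) \in `]- p ord0 i, p ord0 i[.
  by rewrite in_itv /=; apply/andP; split; lra.
have Dz := @derive1_at_min R Psi (- p ord0 i) (p ord0 i) 0 hab hder h0 Hmin.
suff -> : \sum_k p ord0 k * partial (f D loss A k) p i = derive Psi 0 1.
  by case: Dz.
have d0 : (0 : R) + 1 != 0 by rewrite add0r oner_neq0.
rewrite /Psi derive_sum; last by move=> k; apply: derivableZ; exact: dpsi.
apply: eq_bigr => k _; rewrite deriveZ; last exact: dpsi.
by rewrite /partial derive_dir.
Qed.
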